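(* In the setting of the context, let $\omega\in\overline{\mathbb{C}}\setminus(i\mathbb{R}\cup\{\delta_+,\delta_-,\infty\})$, $\omega=\omega_\Re+i\omega_\Im$. Then $\omega\in W_\Omega(T)$ if and only if $\omega\notin\partial\mathcal{D}$ and $$\hat\beta(\omega):=\frac{-2\omega_\Im\left((-\omega_\Re^2+\omega_\Im^2+d\omega_\Im+c)^2+\omega_\Re^2(2\omega_\Im+d)^2\right)}{d|\omega|^2+2c\omega_\Im}\in\overline{W(B)}$$ and $$\hat\alpha(\omega):=\frac{(2\omega_\Im+d)|\omega|^4}{d|\omega|^2+2c\omega_\Im}\in\overline{W(A)}.$$
   Context: Let $\mathcal{H}$ be a Hilbert space, $A$ a selfadjoint (possibly unbounded) operator in $\mathcal{H}$ and $B$ a nonzero bounded selfadjoint operator. Let $c\ge0$, $d>0$, $\delta_\pm:=\pm\sqrt{c-d^2/4}-id/2$ (principal square root). $W(A),W(B)\subset\mathbb{R}$ are the numerical ranges. For real $\alpha,\beta$ let $p_{(\alpha,\beta)}(\omega):=(\alpha-\omega^2)(c-id\omega-\omega^2)-\beta\omega^2$ with roots $r_1,\dots,r_4$ labelled continuously in $(\alpha,\beta)$ and extended by limits to $\overline{\mathbb{R}}\times\mathbb{R}$ ($\overline{\mathbb{R}}=\mathbb{R}\cup\{\pm\infty\}$), values in $\overline{\mathbb{C}}$. Let $\Omega:=\overline{W(A)}\times\overline{W(B)}$ (closure of $W(A)$ in $\overline{\mathbb{R}}$) and $W_\Omega(T):=\bigcup_{n=1}^4\bigcup_{(\alpha,\beta)\in\Omega}r_n(\alpha,\beta)$.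 Let $\mathcal{D}:=\{\omega\in\mathbb{C}:|\omega+ic/d|<c/d\}$. *)

(* Defs.v *)
From HB Require Import structures.
From mathcomp Require Import all_boot all_order all_algebra.
From mathcomp Require Import complex.
From mathcomp Require Import all_classical all_reals.
From mathcomp Require Import topology normedtype ereal.


Set Implicit Arguments.
Unset Strict Implicit.
Unset Printing Implicit Defensive.

Import Order.TTheory GRing.Theory Num.Theory.
Import numFieldNormedType.Exports.
Local Open Scope ring_scope.
Local Open Scope classical_set_scope.
Local Open Scope complex_scope.

Section Defs.
Variable R : realType.
Local Notation C := R[i].

Definition cabs (z : C) : R := ComplexField.Normc.normc z.

Section Hilbert.
Variable H : lmodType C.
Variable inner : H -> H -> C.

Definition hnorm (x : H) : R := Num.sqrt (complex.Re (inner x x)).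

Definition is_hilbert : Prop :=
  [/\ (forall (a : C) (x y z : H), inner (a *: x + y) z = a * inner x z + inner y z),
      (forall x y : H, inner y x = (inner x y)^*),
      (forall x : H, x != 0 -> 0 < inner x x) &
      (forall u : nat -> H,
         (forall e : R, 0 < e -> exists N : nat, forall m n : nat,
             (N <= m)%N -> (N <= n)%N -> hnorm (u m - u n) < e) ->
         exists l : H, forall e : R, 0 < e -> exists N : nat, forall n : nat,
             (N <= n)%N -> hnorm (u n - l) < e)].

(* (possibly unbounded) selfadjoint operator A with domain D:
   D is a dense linear subspace, A is linear on D, and A = A^*, i.e.
   y \in dom(A^* ) with A^* y = z  <->  y \in D and A y = z. *)
Definition selfadjoint (D : set H) (A : H -> H) : Prop :=
  [/\ D 0,
      (forall (a : C) (x y : H), D x -> D y -> D (a *: x + y)),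
      (forall (a : C) (x y : H), D x -> D y -> A (a *: x + y) = a *: A x + A y),
      (forall (x : H) (e : R), 0 < e -> exists y : H, D y /\ hnorm (x - y) < e) &
      (forall y z : H, (forall x : H, D x -> inner (A x) y = inner x z) <->
                       (D y /\ z = A y))].

Definition bounded_selfadjoint (B : H -> H) : Prop :=
  [/\ (forall (a : C) (x y : H), B (a *: x + y) = a *: B x + B y),
      (exists M : R, forall x : H, hnorm (B x) <= M * hnorm x) &
      (forall x y : H, inner (B x) y = inner x (B y))].

Definition numrange (D : set H) (A : H -> H) : set R :=
  [set r : R | exists x : H, [/\ D x, hnorm x = 1 & inner (A x) x = r%:C]].
End Hilbert.

Definition pT (c d alpha beta : R) (w : C) : C :=
  (alpha%:C - w ^+ 2) * (c%:C - 'i * d%:C * w - w ^+ 2) - beta%:C * w ^+ 2.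

Definition psqrt (x : R) : C :=
  if 0 <= x then (Num.sqrt x)%:C else (Num.sqrt (- x))*i.

Definition delta_p (c d : R) : C := psqrt (c - d ^+ 2 / 4%:R) - 'i * (d / 2%:R)%:C.
Definition delta_m (c d : R) : C := - psqrt (c - d ^+ 2 / 4%:R) - 'i * (d / 2%:R)%:C.

(* extended complex plane: None = infinity *)
Definition Cbar := option C.

(* limits in the extended complex plane of roots r_n(alpha, beta) as
   alpha -> +oo (up = true) or alpha -> -oo (up = false) *)
Definition limit_roots (c d : R) (up : bool) (beta : R) : set Cbar :=
  [set w : Cbar | exists (al : nat -> R) (z : nat -> C),
     [/\ (forall M : R, exists N : nat, forall k : nat, (N <= k)%N ->
            if up then M < al k else al k < M),
         (forall k : nat, pT c d (al k) beta (z k) = 0) &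
         match w with
         | Some w' => forall e : R, 0 < e -> exists N : nat, forall k : nat,
                        (N <= k)%N -> cabs (z k - w') < e
         | None => forall M : R, exists N : nat, forall k : nat,
                        (N <= k)%N -> M < cabs (z k)
         end]].

(* { r_1(alpha,beta), ..., r_4(alpha,beta) } for (alpha,beta) in Rbar x R *)
Definition root_set (c d : R) (a : \bar R) (beta : R) : set Cbar :=
  match a with
  | EFin alpha => [set w : Cbar | exists z : C, w = Some z /\ pT c d alpha beta z = 0]
  | +oo%E => limit_roots c d true beta
  | -oo%E => limit_roots c d false beta
  end.

Definition W_Omega (c d : R) (WA WB : set R) : set Cbar :=
  [set w : Cbar | exists (a : \bar R) (beta : R),
     [/\ closure [set r%:E | r in WA] a, closure WB beta & root_set c d a beta w]].

Definition discD (c d : R) : set C :=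
  [set z : C | cabs (z + 'i * (c / d)%:C) < c / d].

Definition bdD (c d : R) : set C :=
  [set z : C | forall e : R, 0 < e ->
     (exists u : C, cabs (u - z) < e /\ discD c d u) /\
     (exists u : C, cabs (u - z) < e /\ ~ discD c d u)].

Definition beta_hat (c d : R) (w : C) : R :=
  let a := complex.Re w in let b := complex.Im w in
  (- 2%:R * b * ((- a ^+ 2 + b ^+ 2 + d * b + c) ^+ 2 + a ^+ 2 * (2%:R * b + d) ^+ 2))
  / (d * (a ^+ 2 + b ^+ 2) + 2%:R * c * b).

Definition alpha_hat (c d : R) (w : C) : R :=
  let a := complex.Re w in let b := complex.Im w in
  ((2%:R * b + d) * (a ^+ 2 + b ^+ 2) ^+ 2) / (d * (a ^+ 2 + b ^+ 2) + 2%:R * c * b).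

End Defs.

(* Main.v *)
Require Import Defs.
From HB Require Import structures.
From mathcomp Require Import all_boot all_order all_algebra.
From mathcomp Require Import complex.
From mathcomp Require Import all_classical all_reals.
From mathcomp Require Import topology normedtype ereal.
From mathcomp Require Import ring lra.
Import Order.TTheory GRing.Theory Num.Theory.
Import numFieldNormedType.Exports.
Local Open Scope ring_scope.
Local Open Scope classical_set_scope.
Local Open Scope complex_scope.

Section S.
Variable R : realType.
Implicit Types (x y u v : R[i]).

Lemma cabsD x y : cabs (x+y) <= cabs x + cabs y.
Proof. exact: le_normcD. Qed.
Lemma cabsM x y : cabs (x*y) = cabs x * cabs y.
Proof. exact: ComplexField.Normc.normcM. Qed.
Lemma cabsN x : cabs (- x) = cabs x.
Proof. exact: normcN. Qed.
Lemma cabs_ge0 x : 0 <= cabs x.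
Proof. by case: x => a b; rewrite /cabs /= sqrtr_ge0. Qed.
Lemma cabs_eq0 x : cabs x = 0 -> x = 0.
Proof. exact: ComplexField.Normc.eq0_normc. Qed.
Lemma cabsR (s : R) : cabs s%:C = `|s|.
Proof. by rewrite /cabs /= expr0n /= addr0 sqrtr_sqr. Qed.
Lemma cabsE (a b : R) : cabs (a +i* b) = Num.sqrt (a^+2 + b^+2).
Proof. by []. Qed.
Lemma cabsB x y : cabs (x - y) = cabs (y - x).
Proof. by rewrite -cabsN opprB. Qed.

Definition den (c d a b : R) := d * (a^+2 + b^+2) + 2%:R * c * b.

Lemma bd1 (c d a b : R) : 0 < d -> den c d a b != 0 -> ~ bdD c d (a +i* b).
Proof.
move=> d0 hden hbd.
set k := c / d.
set r := cabs (a +i* b + 'i * k%:C).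
have er : r = Num.sqrt (a^+2 + (b + k)^+2).
  rewrite /r /=; congr (Num.sqrt _); rewrite !expr2 /=; ring.
have r0 : 0 <= r by rewrite er sqrtr_ge0.
have er2 : den c d a b = d * (r^+2 - k^+2).
  rewrite er sqr_sqrtr ?addr_ge0 ?sqr_ge0 // /den /k; field; lra.
have [rk|rk|rk] := ltgtP r k.
- have [_ [u [hu hD]]] := hbd (k - r) ltac:(lra).
  apply: hD; change (cabs (u + 'i * k%:C) < k).
  have -> : u + 'i * k%:C = (u - (a +i* b)) + (a +i* b + 'i * k%:C) by ring.
  apply: le_lt_trans (cabsD _ _) _; rewrite -/r; lra.
- have [[u [hu hD]] _] := hbd (r - k) ltac:(lra).
  have {}hD : cabs (u + 'i * k%:C) < k := hD.
  have : r <= cabs (a +i* b - u) + cabs (u + 'i * k%:C).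
    rewrite /r; have -> : a +i* b + 'i * k%:C = (a +i* b - u) + (u + 'i * k%:C) by ring.
    exact: cabsD.
  rewrite cabsB; lra.
- by move: hden; rewrite er2 rk subrr mulr0 eqxx.
Qed.

Lemma bd2 (c d a b : R) : 0 <= c -> 0 < d -> a != 0 -> den c d a b = 0 -> bdD c d (a +i* b).
Proof.
move=> c0 d0 a0 hden e e0.
set k := c / d.
set v := a +i* b + 'i * k%:C.
have ev : cabs v = Num.sqrt (a^+2 + (b + k)^+2).
  rewrite /v /=; congr (Num.sqrt _); rewrite !expr2 /=; ring.
have e2 : a^+2 + (b + k)^+2 = k^+2.
  have : d * (a^+2 + (b + k)^+2 - k^+2) = 0.
    rewrite -hden /den /k; field; lra.
  by move/eqP; rewrite mulf_eq0 gt_eqF //= subr_eq0 => /eqP.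
have k0 : 0 <= k by rewrite /k divr_ge0 // ltW.
have vk : cabs v = k by rewrite ev e2 sqrtr_sqr ger0_norm.
have kp : 0 < k.
  rewrite lt_def k0 andbT; apply/negP => /eqP k00.
  move: e2; rewrite k00 expr0n /= addr0 => /eqP; rewrite paddr_eq0 ?sqr_ge0 //.
  by rewrite sqrf_eq0 (negbTE a0).
set s := e / (e + 2%:R * k).
have s0 : 0 < s by rewrite /s divr_gt0 //; lra.
have s1 : s < 1 by rewrite /s ltr_pdivrMr; lra.
have sk : s * k < e.
  rewrite /s mulrAC ltr_pdivrMr; last lra.
  nra.
have cs : forall t : R, cabs (a +i* b + t%:C * v - a +i* b) = `|t| * k.
  by move=> t; rewrite addrAC subrr add0r cabsM cabsR vk.
split.
- exists (a +i* b + (- s)%:C * v); split; first by rewrite cs normrN gtr0_norm.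
  change (cabs (a +i* b + (- s)%:C * v + 'i * k%:C) < k).
  have -> : a +i* b + (- s)%:C * v + 'i * k%:C = (1 - s)%:C * v.
    by rewrite /v rmorphB /= rmorphN; ring.
  rewrite cabsM cabsR vk gtr0_norm; nra.
- exists (a +i* b + s%:C * v); split; first by rewrite cs gtr0_norm.
  change (~ cabs (a +i* b + s%:C * v + 'i * k%:C) < k).
  have -> : a +i* b + s%:C * v + 'i * k%:C = (1 + s)%:C * v.
    by rewrite /v rmorphD /=; ring.
  rewrite cabsM cabsR vk gtr0_norm; nra.
Qed.

Lemma delta_case (c d a b : R) : 0 < d -> a != 0 -> 2%:R * b + d = 0 -> den c d a b = 0 ->
  a +i* b = delta_p c d \/ a +i* b = delta_m c d.
Proof.
move=> d0 a0 hb hden.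
have eb : b = - (d / 2%:R) by lra.
have ex : c - d ^+ 2 / 4%:R = a ^+ 2.
  have : d * (a^+2 - (c - d ^+ 2 / 4%:R)) = den c d a b.
    rewrite /den eb; by field.
  rewrite hden => /eqP; rewrite mulf_eq0 (gt_eqF d0) /= subr_eq0 => /eqP h; by rewrite h.
have hp : psqrt (c - d ^+ 2 / 4%:R) = `|a|%:C.
  by rewrite /psqrt ex sqr_ge0 sqrtr_sqr.
rewrite /delta_p /delta_m hp.
have [ag|al] := leP 0 a.
- left; rewrite ger0_norm //; apply/eqP; rewrite eq_complex /=; apply/andP; split; apply/eqP; lra.
- right; rewrite ltr0_norm //; apply/eqP; rewrite eq_complex /=; apply/andP; split; apply/eqP; lra.
Qed.

Definition E1 (c d al be a b : R) := (al - (a*a - b*b)) * (c + d*b - a*a + b*b) + (2%:R*a*b)*(-(a*(2%:R*b+d))) - be*(a*a-b*b).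
Definition E2 (c d al be a b : R) := (al - (a*a - b*b)) * (-(a*(2%:R*b+d))) - (2%:R*a*b)*(c + d*b - a*a + b*b) - be*(2%:R*a*b).

Lemma pT_comp (c d al be a b : R) :
  pT c d al be (a +i* b) = E1 c d al be a b +i* E2 c d al be a b.
Proof. rewrite /pT /E1 /E2 !expr2 /=. congr (_ +i* _); ring. Qed.

Lemma alg_fwd (c d al be a b : R) : 0 < d -> a != 0 -> pT c d al be (a +i* b) = 0 ->
  a +i* b != delta_p c d -> a +i* b != delta_m c d ->
  [/\ den c d a b != 0, al = alpha_hat c d (a +i* b) & be = beta_hat c d (a +i* b)].
Proof.
move=> d0 a0; rewrite pT_comp => /eqP; rewrite eq_complex /= => /andP[/eqP e1 /eqP e2] hp hm.
have h1 : al * (a * den c d a b) - a * (2%:R*b+d) * (a^+2+b^+2)^+2 = 0.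
  rewrite (_ : _ - _ = 2%:R*a*b * E1 c d al be a b - (a*a-b*b) * E2 c d al be a b).
    by rewrite e1 e2; ring.
  by rewrite /E1 /E2 /den; ring.
have h2 : be * (a * den c d a b) + 2%:R*a*b*((c + d*b - a*a + b*b)^+2 + (a*(2%:R*b+d))^+2) = 0.
  rewrite (_ : _ + _ = (-(a*(2%:R*b+d))) * E1 c d al be a b - (c + d*b - a*a + b*b) * E2 c d al be a b).
    by rewrite e1 e2; ring.
  by rewrite /E1 /E2 /den; ring.
have n0 : a^+2 + b^+2 != 0.
  by rewrite paddr_eq0 ?sqr_ge0 // sqrf_eq0 (negbTE a0).
have hden : den c d a b != 0.
  apply/negP => /eqP h0; move: h1; rewrite h0 mulr0 mulr0 sub0r => /eqP; rewrite oppr_eq0.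
  rewrite !mulf_eq0 (negbTE a0) /= (negbTE n0) !orbF => /eqP hb.
  by case: (delta_case c d a b d0 a0 hb h0) => /eqP; rewrite ?(negbTE hp) ?(negbTE hm).
split => //.
- rewrite /alpha_hat /= -/(den c d a b).
  rewrite (_ : al = al * (a * den c d a b) / (a * den c d a b)); last by field; rewrite a0 hden.
  have -> : al * (a * den c d a b) = a * (2%:R*b+d) * (a^+2+b^+2)^+2 by apply/eqP; rewrite -subr_eq0 h1.
  by field; rewrite a0 hden.
- rewrite /beta_hat /= -/(den c d a b).
  rewrite (_ : be = be * (a * den c d a b) / (a * den c d a b)); last by field; rewrite a0 hden.
  have -> : be * (a * den c d a b) = - (2%:R*a*b*((c + d*b - a*a + b*b)^+2 + (a*(2%:R*b+d))^+2)).
    by apply/eqP; rewrite -addr_eq0 h2.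
  by field; rewrite a0 hden.
Qed.

Lemma alg_bwd (c d a b : R) : den c d a b != 0 ->
  pT c d (alpha_hat c d (a +i* b)) (beta_hat c d (a +i* b)) (a +i* b) = 0.
Proof.
move=> hden; rewrite pT_comp /alpha_hat /beta_hat /= -/(den c d a b).
apply/eqP; rewrite eq_complex /=; apply/andP; split; apply/eqP; rewrite /E1 /E2 /den;
  field; move: hden; rewrite /den //.
Qed.

Lemma cabs_i : cabs ('i : R[i]) = 1.
Proof. by rewrite /cabs /= expr0n /= add0r expr1n sqrtr1. Qed.

Lemma lim_q (c d be : R) (up : bool) (w : R[i]) : 0 < d ->
  limit_roots c d up be (Some w) -> c%:C - 'i * d%:C * w - w ^+ 2 = 0.
Proof.
move=> d0 [al [z [hal hz hconv]]].
set q := fun x : R[i] => c%:C - 'i * d%:C * x - x ^+ 2.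
change (q w = 0).
apply: contrapT => qn0.
set K := cabs (q w).
have K0 : 0 < K.
  rewrite lt_def cabs_ge0 andbT; apply/negP => /eqP /cabs_eq0; exact: qn0.
set M := cabs w + 1.
set L := d + 2%:R * cabs w + 1.
have cw0 := cabs_ge0 w.
have L0 : 0 < L by rewrite /L; lra.
set e := K / (K + 2%:R * L).
have e0 : 0 < e by rewrite /e divr_gt0 //; lra.
have e1 : e < 1 by rewrite /e ltr_pdivrMr; lra.
have eL : e * L <= K / 2%:R.
  rewrite /e mulrAC ler_pdivrMr; last lra.
  rewrite mulrAC ler_pdivlMr; last lra. nra.
have [N1 hN1] := hconv e e0.
set Th := M ^+ 2 * (3%:R * K + 2%:R * `|be|) / K.
have hTh : Th * K = M ^+ 2 * (3%:R * K + 2%:R * `|be|) by rewrite /Th; field; rewrite gt_eqF.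
have [N2 hN2] : exists N2, forall k, (N2 <= k)%N -> Th < `|al k|.
  case: up hal => hal.
  - have [N hN] := hal Th; exists N => k hk.
    exact: lt_le_trans (hN k hk) (ler_norm _).
  - have [N hN] := hal (- Th); exists N => k hk.
    have := hN k hk; rewrite ltrNr => h; apply: lt_le_trans h _.
    by rewrite -normrN ler_norm.
set k := maxn N1 N2.
have dl := hN1 k (leq_maxl _ _).
have Al := hN2 k (leq_maxr _ _).
set zk := z k in dl Al.
have cz : cabs zk <= M.
  have -> : zk = (zk - w) + w by ring.
  apply: le_trans (cabsD _ _) _; rewrite /M; lra.
have cz0 := cabs_ge0 zk.
have qd : q zk - q w = (zk - w) * (- ('i * d%:C) - (zk + w)) by rewrite /q; ring.
have cqd : cabs (q zk - q w) <= K / 2%:R.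
  rewrite qd cabsM.
  have h3 : cabs (- ('i * d%:C) - (zk + w)) <= L.
    apply: le_trans (cabsD _ _) _; rewrite !cabsN. rewrite cabsM cabs_i cabsR mul1r ger0_norm; last lra.
    have := cabsD zk w; rewrite /L /M in cz *; lra.
  have hd0 := cabs_ge0 (zk - w).
  apply: le_trans eL; apply: le_trans (ler_wpM2l hd0 h3) _.
  by rewrite ler_wpM2r //; [lra | apply: ltW].
have lowq : K / 2%:R <= cabs (q zk).
  have : K <= cabs (q zk) + cabs (q w - q zk).
    by have := cabsD (q zk) (q w - q zk); rewrite (addrC (q zk)) subrK.
  rewrite cabsB; lra.
have upq : cabs (q zk) <= K + K / 2%:R.
  have : cabs (q zk) <= cabs (q zk - q w) + K.
    by have := cabsD (q zk - q w) (q w); rewrite subrK.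
  lra.
have eq1 : (al k)%:C * q zk = zk ^+ 2 * (q zk + be%:C).
  apply/eqP; rewrite -subr_eq0; apply/eqP; rewrite -(hz k) /pT /q -/zk; ring.
have eq2 : `|al k| * cabs (q zk) = cabs zk ^+ 2 * cabs (q zk + be%:C).
  by rewrite -cabsR -cabsM eq1 cabsM expr2 cabsM expr2.
have y1 : cabs (q zk + be%:C) <= K + K / 2%:R + `|be|.
  apply: le_trans (cabsD _ _) _; rewrite cabsR; lra.
have y0 := cabs_ge0 (q zk + be%:C).
have nb := normr_ge0 be.
have z2 : cabs zk ^+ 2 <= M ^+ 2 by rewrite ler_sqr ?nnegrE //; lra.
have a1 : Th * (K / 2%:R) < `|al k| * cabs (q zk).
  apply: lt_le_trans (ler_wpM2l (normr_ge0 _) lowq).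
  by rewrite ltr_pM2r //; lra.
have a2 : cabs zk ^+ 2 * cabs (q zk + be%:C) <= M ^+ 2 * (K + K / 2%:R + `|be|).
  apply: le_trans (ler_wpM2l (sqr_ge0 _) y1) _.
  rewrite ler_wpM2r //; lra.
have a3 : Th * (K / 2%:R) = M ^+ 2 * (K + K / 2%:R + `|be|).
  by rewrite mulrA hTh; field.
lra.
Qed.

Lemma q_delta (c d a b : R) : 0 < d -> a != 0 ->
  c%:C - 'i * d%:C * (a +i* b) - (a +i* b) ^+ 2 = 0 ->
  a +i* b = delta_p c d \/ a +i* b = delta_m c d.
Proof.
move=> d0 a0; rewrite expr2 => /eqP; rewrite eq_complex /= => /andP[/eqP h1 /eqP h2].
have e2 : a * (2%:R * b + d) = 0 by nra.
have P0 : c + d * b - a * a + b * b = 0 by nra.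
have hb : 2%:R * b + d = 0.
  by move/eqP: e2; rewrite mulf_eq0 (negbTE a0) /= => /eqP.
apply: delta_case => //.
have -> : den c d a b = (2%:R * b + d) * (c + d * b) - d * (c + d * b - a * a + b * b).
  by rewrite /den; ring.
by rewrite hb P0; ring.
Qed.
End S.

Theorem proposition2p6 (R : realType) (H : lmodType R[i]) (inner : H -> H -> R[i])
  (DA : set H) (A B : H -> H) (c d : R) (w : R[i]) :
  is_hilbert inner ->
  selfadjoint inner DA A ->
  bounded_selfadjoint inner B ->
  (exists x : H, B x != 0) ->
  0 <= c -> 0 < d ->
  complex.Re w != 0 -> w != delta_p c d -> w != delta_m c d ->
  (W_Omega c d (numrange inner DA A) (numrange inner setT B) (Some w) <->
   [/\ ~ bdD c d w,
       closure (numrange inner setT B) (beta_hat c d w) &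
       closure [set r%:E | r in numrange inner DA A] (alpha_hat c d w)%:E]).
Proof.
move=> _ _ _ _ c0 d0; case: w => a b /= a0 hp hm.
split.
- case=> aa [be [hA hB hroot]].
  case: aa hA hroot => [al| |] hA hroot.
  + case: hroot => z [[<-] hz].
    have [hden eal ebe] := @alg_fwd R _ _ _ _ _ _ d0 a0 hz hp hm.
    split; first exact: (@bd1 R _ _ _ _ d0 hden).
    * by rewrite -ebe.
    * by rewrite -eal.
  + move: hroot => /= hroot; by case: (@q_delta R _ _ _ _ d0 a0 (@lim_q R _ _ _ _ _ d0 hroot)) => /eqP; rewrite ?(negbTE hp) ?(negbTE hm).
  + move: hroot => /= hroot; by case: (@q_delta R _ _ _ _ d0 a0 (@lim_q R _ _ _ _ _ d0 hroot)) => /eqP; rewrite ?(negbTE hp) ?(negbTE hm).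
- case=> hbd hB hA.
  have hden : @den R c d a b != 0.
    by apply/negP => /eqP h0; apply: hbd; exact: bd2.
  exists (alpha_hat c d (a +i* b))%:E, (beta_hat c d (a +i* b)); split => //.
  by exists (a +i* b); split => //; exact: alg_bwd.
Qed.
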